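(* Consider the multiobjective optimal control setting, Assumption A and Algorithm 1 described in the context, let $x_0\in\mathbb{X}_N$, and assume in addition that there is $\gamma_{\lambda_1}\in\mathcal K_\infty$ with $|\lambda_1(x)-\lambda_1(x^e)|\le\gamma_{\lambda_1}(\|x-x^e\|)$ for all $x\in\mathbb{X}$, and that $\ell_1(x^e,u^e)=0$. Then the MPC feedback $\mu^N:\mathbb{N}_0\times\mathbb{X}\to\mathbb{U}$ defined by Algorithm 1 renders the set $\mathbb{X}$ forward invariant (the closed loop is well defined and stays in $\mathbb{X}$) and has the infinite-horizon closed-loop performance \[J_1^\infty(x_0,\mu^N):=\sum_{k=0}^\infty\ell_1\big(x_\mu(k,x_0),\mu^N(k,x_\mu(k,x_0))\big)\le J_1^N(x_0,\mathbf{u}^\star_{x_0}),\] where $\mathbf{u}^\star_{x_0}$ is the efficient solution chosen in step (0) of Algorithm 1.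
   Context: Let $f:\mathbb{R}^n\times\mathbb{R}^m\to\mathbb{R}^n$ be continuous and consider $x(k+1)=f(x(k),u(k))$, $x(0)=x_0$; $x_{\mathbf{u}}(k,x_0)$ denotes the solution for control sequence $\mathbf u$. Let $\mathbb{X}\subseteq\mathbb{R}^n$, $\mathbb{U}\subseteq\mathbb{R}^m$, $\mathbb{X}_0\subseteq\mathbb{X}$ be nonempty; horizons $N\ge2$, objectives $s\ge2$. $\mathbb{U}^N(x_0)$ is the set of $\mathbf{u}\in\mathbb{U}^N$ with $x_{\mathbf{u}}(k,x_0)\in\mathbb{X}$ for $k=1,\dots,N-1$ and $x_{\mathbf{u}}(N,x_0)\in\mathbb{X}_0$; $\mathbb{X}_N=\{x_0\in\mathbb{X}:\mathbb{U}^N(x_0)\neq\emptyset\}$. With stage costs $\ell_i:\mathbb{X}\times\mathbb{U}\to\mathbb{R}$ ($i=1,\dots,s$) and continuous $F_1:\mathbb{X}_0\to\mathbb{R}_{\ge0}$: $J_1^N(x_0,\mathbf{u})=\sum_{k=0}^{N-1}\ell_1(x_{\mathbf{u}}(k,x_0),u(k))+F_1(x_{\mathbf{u}}(N,x_0))$, $J_i^N(x_0,\mathbf{u})=\sum_{k=0}^{N-1}\ell_i(x_{\mathbf{u}}(k,x_0),u(k))$ for $i\ge2$. $\mathbf{u}^\star\in\mathbb{U}^N(x_0)$ is efficient if no $\mathbf{u}\in\mathbb{U}^N(x_0)$ satisfies $J_i^N(x_0,\mathbf{u})\le J_i^N(x_0,\mathbf{u}^\star)$ for all $i$ with strict inequality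 for some $i$; $\mathbb{U}^N_{\mathcal P}(x_0)$ is the efficient set. $\mathcal{J}^N(x_0)$ is the set of vectors $(J_i^N(x_0,\mathbf u))_{i=1}^s$, $\mathbf u\in\mathbb{U}^N(x_0)$, $\mathcal{J}^N_{\mathcal P}(x_0)$ the subset for efficient $\mathbf u$; external stability means every $y\in\mathcal{J}^N(x_0)$ dominates componentwise some $y_{\mathcal P}\in\mathcal{J}^N_{\mathcal P}(x_0)$. $\mathcal K_\infty$: continuous strictly increasing unbounded functions $\mathbb{R}_{\ge0}\to\mathbb{R}_{\ge0}$ vanishing at $0$. Assumption A: (i) $(x^e,u^e)\in\mathbb{X}\times\mathbb{U}$ with $f(x^e,u^e)=x^e$; (ii) $\lambda_1:\mathbb{X}\to\mathbb{R}$ bounded below, $\lambda_1(x^e)=0$, $\alpha_{\ell,1}\in\mathcal K_\infty$ with $\ell_1(x,u)-\ell_1(x^e,u^e)+\lambda_1(x)-\lambda_1(f(x,u))\ge\alpha_{\ell,1}(\|x-x^e\|+\|u-u^e\|)$ on $\mathbb{X}\times\mathbb{U}$; (iii) all $\ell_i$ continuous; (iv) $x^e\in\mathbb{X}_0$ and $\kappa:\mathbb{X}_0\to\mathbb{U}$ with $f(x,\kappa(x))\in\mathbb{X}_0$ and $F_1(f(x,\kappa(x)))+\ell_1(x,\kappa(x))\le F_1(x)+\ell_1(x^e,u^e)$ for all $x\in\mathbb{X}_0$; (v) $\mathcal{J}^N_{\mathcal P}(x)$ externally stable for $\mathcal{J}^N(x)$ for all $x\in\mathbb{X}_N$. Algorithm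 1 ($k\in\mathbb N_0$): $x(0)=x_0$, choose any $\mathbf{u}^\star_{x(0)}=\mathbf{u}^\star_{x_0}\in\mathbb{U}^N_{\mathcal P}(x(0))$; for $k\ge1$ choose $\mathbf{u}^\star_{x(k)}\in\mathbb{U}^N_{\mathcal P}(x(k))$ with $J_1^N(x(k),\mathbf{u}^\star_{x(k)})\le J_1^N(x(k),\mathbf{u}_{x(k)})$, where $\mathbf{u}_{x(k+1)}:=(u^\star_{x(k)}(1),\dots,u^\star_{x(k)}(N-1),\kappa(x_{\mathbf{u}^\star_{x(k)}}(N,x(k))))$. Feedback $\mu^N(k,x(k)):=u^\star_{x(k)}(0)$, $x(k+1)=f(x(k),\mu^N(k,x(k)))$, $x_\mu(k,x_0):=x(k)$. The statement applies to any admissible choices of efficient solutions. *)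

(* Defs.v *)
From HB Require Import structures.
From mathcomp Require Import all_boot all_order all_algebra.
From mathcomp Require Import all_classical all_reals all_analysis.
Set Implicit Arguments.
Unset Strict Implicit.
Unset Printing Implicit Defensive.
Import Order.TTheory GRing.Theory Num.Theory.
Import numFieldNormedType.Exports.
Local Open Scope classical_set_scope.
Local Open Scope ring_scope.

Section MOMPC.
Variables (R : realType) (n m : nat).
Notation state := 'rV[R]_n.
Notation control := 'rV[R]_m.

(* class K_infinity, for functions R_{>=0} -> R_{>=0} represented on R *)
Definition Kinf (a : R -> R) : Prop :=
  a 0 = 0 /\
  {within [set x : R | 0 <= x], continuous a} /\
  (forall x y : R, 0 <= x -> x < y -> a x < a y) /\
  (forall M : R, exists x : R, 0 <= x /\ M < a x).

Fixpoint traj (f : state -> control -> state) (x0 : state)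
    (u : nat -> control) (k : nat) : state :=
  match k with
  | 0 => x0
  | k'.+1 => f (traj f x0 u k') (u k')
  end.

(* u (restricted to 0..N-1) belongs to U^N(x0) *)
Definition admissible (f : state -> control -> state)
    (X X0 : set state) (U : set control) (N : nat) (x0 : state) (u : nat -> control) : Prop :=
  (forall k, (k < N)%N -> U (u k)) /\
  (forall k, (1 <= k)%N -> (k <= N.-1)%N -> X (traj f x0 u k)) /\
  X0 (traj f x0 u N).

Definition feasible_set (f : state -> control -> state)
    (X X0 : set state) (U : set control) (N : nat) : set state :=
  [set x0 | X x0 /\ exists u, admissible f X X0 U N x0 u].

(* objective J_i^N; the objective with index 0 is J_1 (it carries F_1) *)
Definition Jobj (f : state -> control -> state) (s : nat)
    (ell : 'I_s -> state -> control -> R) (F1 : state -> R)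
    (N : nat) (i : 'I_s) (x0 : state) (u : nat -> control) : R :=
  \sum_(k < N) ell i (traj f x0 u k) (u k)
  + (if val i == 0%N then F1 (traj f x0 u N) else 0).

Definition efficient (f : state -> control -> state) (X X0 : set state) (U : set control)
    (s : nat) (ell : 'I_s -> state -> control -> R) (F1 : state -> R)
    (N : nat) (x0 : state) (us : nat -> control) : Prop :=
  admissible f X X0 U N x0 us /\
  ~ (exists u, admissible f X X0 U N x0 u /\
       (forall i, Jobj f ell F1 N i x0 u <= Jobj f ell F1 N i x0 us) /\
       (exists i, Jobj f ell F1 N i x0 u < Jobj f ell F1 N i x0 us)).

Definition externally_stable (f : state -> control -> state)
    (X X0 : set state) (U : set control) (s : nat) (ell : 'I_s -> state -> control -> R)
    (F1 : state -> R) (N : nat) (x0 : state) : Prop :=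
  forall u, admissible f X X0 U N x0 u ->
    exists up, efficient f X X0 U ell F1 N x0 up /\
      (forall i, Jobj f ell F1 N i x0 up <= Jobj f ell F1 N i x0 u).

Definition candidate (f : state -> control -> state) (kappa : state -> control)
    (N : nat) (xk : state) (us : nat -> control) : nat -> control :=
  fun j => if (j < N.-1)%N then us j.+1 else kappa (traj f xk us N).

(* Algorithm 1, steps 0..K: xs is the closed-loop state, us k = u*_{x(k)} *)
Definition alg1_upto (f : state -> control -> state) (X X0 : set state) (U : set control)
    (s : nat) (ell : 'I_s -> state -> control -> R) (F1 : state -> R)
    (kappa : state -> control) (N : nat) (i1 : 'I_s) (x0 : state)
    (xs : nat -> state) (us : nat -> nat -> control) (K : nat) : Prop :=
  xs 0%N = x0 /\ efficient f X X0 U ell F1 N (xs 0%N) (us 0%N) /\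
  forall k, (k < K)%N ->
    xs k.+1 = f (xs k) (us k 0%N) /\
    efficient f X X0 U ell F1 N (xs k.+1) (us k.+1) /\
    Jobj f ell F1 N i1 (xs k.+1) (us k.+1)
      <= Jobj f ell F1 N i1 (xs k.+1) (candidate f kappa N (xs k) (us k)).

End MOMPC.

(* Main.v *)
Set Warnings "-notation-overridden,-ambiguous-paths,-notation-incompatible-prefix".
Require Import Defs.
From HB Require Import structures.
From mathcomp Require Import all_boot all_order all_algebra.
From mathcomp Require Import all_classical all_reals all_analysis.
From mathcomp Require Import ring lra.
Import Order.TTheory GRing.Theory Num.Theory.
Import numFieldNormedType.Exports.
Local Open Scope classical_set_scope.
Local Open Scope ring_scope.
Set Implicit Arguments.
Unset Strict Implicit.

Lemma Kinf_ge0 (R : realType) (a : R -> R) : Kinf a -> forall t, 0 <= t -> 0 <= a t.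
Proof.
case=> [a0 [_ [inc _]]] t; rewrite le_eqVlt => /orP[/eqP<-|t0]; first by rewrite a0.
by rewrite -a0 ltW // inc.
Qed.

Lemma Kinf_le (R : realType) (a : R -> R) : Kinf a -> forall t u, 0 <= t -> t <= u -> a t <= a u.
Proof.
case=> [a0 [_ [inc _]]] t u t0; rewrite le_eqVlt => /orP[/eqP->//|tu].
by rewrite ltW // inc.
Qed.

Lemma Kinf_small (R : realType) (g : R -> R) : Kinf g ->
  forall e, 0 < e -> exists d, 0 < d /\ forall t, 0 <= t -> t < d -> g t < e.
Proof.
case=> [g0 [gc _]] e e0.
have := (proj1 (subspace_continuousP _ _) gc 0 (lexx 0)).
move/cvgrPdist_lt => /(_ e e0).
rewrite /within /from_subspace /=.
case/nbhs_ballP => d d0 H; exists d; split => // t t0 td.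
have := H t; rewrite /ball /= sub0r normrN ger0_norm // => /(_ td) /(_ t0).
rewrite g0 sub0r normrN.
by move/(le_lt_trans (ler_norm _)).
Qed.

Lemma sum_dec (R : realType) (d W : nat -> R) :
  (forall k, W k.+1 + d k <= W k) -> forall K, \sum_(k < K) d k + W K <= W 0%N.
Proof.
move=> h; elim=> [|K IH]; first by rewrite big_ord0 add0r.
rewrite big_ord_recr /=; apply: le_trans IH.
by rewrite -addrA lerD2l addrC.
Qed.

Lemma conv_core (R : realType) (n : nat) (w : nat -> 'rV[R]_n) (d W : nat -> R)
  (xe : 'rV[R]_n) (lam : 'rV[R]_n -> R) (alpha gamma : R -> R) (c : R) :
  Kinf alpha -> Kinf gamma ->
  (forall k, `|lam (w k) - lam xe| <= gamma `|w k - xe|) -> lam xe = 0 ->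
  (forall k, alpha `|w k - xe| <= d k) ->
  (forall k, W k.+1 + d k <= W k) -> (forall k, c <= W k) ->
  cvgn (series d) /\ (fun k => lam (w k)) @ \oo --> 0.
Proof.
move=> Ka Kg hg l0 hd hW hc.
have d0 : forall k, 0 <= d k.
  by move=> k; apply: le_trans (hd k); apply: Kinf_ge0.
have cv : cvgn (series d).
  apply: nondecreasing_is_cvgn.
    by apply: nondecreasing_series => k _ _; apply: d0.
  exists (W 0%N - c) => _ [K _ <-].
  rewrite /series /= big_mkord lerBrDr.
  apply: le_trans; last exact: (sum_dec hW K).
  by rewrite lerD2l.
split => //.
have dto0 := cvg_series_cvg_0 cv.
apply/cvgrPdist_lt => e e0.
have [del [del0 Hdel]] := Kinf_small Kg e0.
have ad0 : 0 < alpha del.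
  by case: Ka => [a0 [_ [inc _]]]; rewrite -a0 inc.
move/cvgrPdist_lt: dto0 => /(_ _ ad0).
apply: filterS => k.
rewrite sub0r normrN ger0_norm ?d0 // => dk.
have wk : `|w k - xe| < del.
  rewrite ltNge; apply/negP => hle.
  have := Kinf_le Ka (ltW del0) hle.
  by move=> h; have := le_lt_trans (le_trans h (hd k)) dk; rewrite ltxx.
rewrite sub0r normrN.
have := hg k; rewrite l0 subr0 => h; apply: le_lt_trans h _.
by apply: Hdel.
Qed.

Lemma tele_le (R : realType) (c lam : nat -> R) K :
  (forall j, (j < K)%N -> lam j.+1 - lam j <= c j) -> lam K - lam 0%N <= \sum_(j < K) c j.
Proof.
elim: K => [|K IH] h; first by rewrite big_ord0 subrr.
rewrite big_ord_recr /=.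
have -> : lam K.+1 - lam 0%N = (lam K - lam 0%N) + (lam K.+1 - lam K) by lra.
apply: lerD; first by apply: IH => j hj; apply: h; apply: ltnW.
exact: h.
Qed.

Lemma tele_eq (R : realType) (c lam : nat -> R) K :
  \sum_(j < K) c j = \sum_(j < K) (c j + lam j - lam j.+1) - lam 0%N + lam K.
Proof.
elim: K => [|K IH]; first by rewrite !big_ord0 sub0r addNr.
rewrite !big_ord_recr /= IH.
by lra.
Qed.

Section Sys.
Context (R : realType) (n m : nat) (f : 'rV[R]_n -> 'rV[R]_m -> 'rV[R]_n)
  (kappa : 'rV[R]_n -> 'rV[R]_m).

Lemma traj_cand N x us j : (j <= N.-1)%N ->
  traj f (f x (us 0%N)) (candidate f kappa N x us) j = traj f x us j.+1.
Proof.
elim: j => [|j IH] hj //=.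
rewrite IH ?(ltnW hj) // /candidate hj.
done.
Qed.

Lemma traj_candN N x us : (0 < N)%N ->
  traj f (f x (us 0%N)) (candidate f kappa N x us) N =
  f (traj f x us N) (kappa (traj f x us N)).
Proof.
case: N => [//|N] _ /=.
rewrite traj_cand //= /candidate ltnn.
done.
Qed.

Lemma cand_adm (X X0 : set 'rV[R]_n) (U : set 'rV[R]_m) N x us :
  (1 < N)%N -> X0 `<=` X ->
  (forall z, X0 z -> U (kappa z) /\ X0 (f z (kappa z))) ->
  admissible f X X0 U N x us ->
  admissible f X X0 U N (f x (us 0%N)) (candidate f kappa N x us).
Proof.
move=> hN sX hk [hU [hX hX0]].
have N0 : (0 < N)%N by apply: ltnW.
split; [|split].
- move=> k hk'; rewrite /candidate.
  case: ifP => h; first by apply: hU; rewrite -ltnS -(ltn_predK hN) ltnS.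
  by have [] := hk _ hX0.
- move=> k k1 kN; rewrite traj_cand //.
  case: (ltnP k N.-1) => h.
    by apply: hX => //; rewrite -ltnS -(ltn_predK hN) ltnS.
  have -> : k.+1 = N by rewrite -(ltn_predK hN); congr _.+1; apply/eqP; rewrite eqn_leq kN h.
  by apply: sX.
- by rewrite traj_candN //; have [] := hk _ hX0.
Qed.

Lemma cand_cost s (ell : 'I_s -> 'rV[R]_n -> 'rV[R]_m -> R) (F1 : 'rV[R]_n -> R)
  N (i : 'I_s) x us : val i = 0%N -> (0 < N)%N ->
  Jobj f ell F1 N i (f x (us 0%N)) (candidate f kappa N x us) =
  Jobj f ell F1 N i x us - ell i x (us 0%N)
  + (ell i (traj f x us N) (kappa (traj f x us N))
     + F1 (f (traj f x us N) (kappa (traj f x us N))) - F1 (traj f x us N)).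
Proof.
move=> hi; rewrite /Jobj hi eqxx.
case: N => [//|N] _.
rewrite traj_candN // big_ord_recr /= big_ord_recl /=.
have -> : \sum_(i0 < N) ell i (traj f (f x (us 0%N)) (candidate f kappa N.+1 x us) i0)
      (candidate f kappa N.+1 x us i0)
  = \sum_(i0 < N) ell i (traj f x us (bump 0 i0)) (us (bump 0 i0)).
  apply: eq_bigr => j _.
  rewrite traj_cand /=; last by apply: ltnW.
  by rewrite /candidate /= ltn_ord.
rewrite traj_cand // /candidate ltnn /=.
lra.
Qed.
End Sys.

Section Sys2.
Context (R : realType) (n m : nat) (f : 'rV[R]_n -> 'rV[R]_m -> 'rV[R]_n)
  (X X0 : set 'rV[R]_n) (U : set 'rV[R]_m)
  (l : 'rV[R]_n -> 'rV[R]_m -> R) (F1 : 'rV[R]_n -> R)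
  (xe : 'rV[R]_n) (ue : 'rV[R]_m) (lam : 'rV[R]_n -> R)
  (alpha gamma : R -> R) (kappa : 'rV[R]_n -> 'rV[R]_m) (c : R).

Lemma F1lam_ge0 :
 X0 `<=` X -> Kinf alpha -> Kinf gamma -> lam xe = 0 -> l xe ue = 0 ->
 (forall x, X x -> c <= lam x) ->
 (forall x, X x -> `|lam x - lam xe| <= gamma `|x - xe|) ->
 (forall x u, X x -> U u -> X (f x u) ->
    alpha (`|x - xe| + `|u - ue|) <= l x u - l xe ue + lam x - lam (f x u)) ->
 (forall x, X0 x -> 0 <= F1 x) ->
 (forall x, X0 x -> U (kappa x) /\ X0 (f x (kappa x)) /\
    F1 (f x (kappa x)) + l x (kappa x) <= F1 x + l xe ue) ->
 forall z, X0 z -> 0 <= F1 z + lam z.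
Proof.
move=> sX Ka Kg l0 le0 hc hg hdis hF hk z hz.
pose g := fun y => f y (kappa y).
pose w := fun t => iter t g z.
have hw : forall t, X0 (w t).
  by elim=> [|t IH] //=; have [_ [] ] := hk _ IH.
pose d := fun t => l (w t) (kappa (w t)) + lam (w t) - lam (w t.+1).
pose W := fun t => F1 (w t) + lam (w t).
have hd : forall t, alpha `|w t - xe| <= d t.
  move=> t; have [hU [hX0' _]] := hk _ (hw t).
  apply: le_trans (_ : alpha (`|w t - xe| + `|kappa (w t) - ue|) <= d t).
    by apply: Kinf_le => //; rewrite lerDl.
  have := hdis _ _ (sX _ (hw t)) hU (sX _ hX0'); rewrite le0 subr0 => h.
  exact: h.
have hW : forall t, W t.+1 + d t <= W t.
  move=> t; have [_ [_ h]] := hk _ (hw t); move: h; rewrite le0 addr0 /W /d /= => h.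
  rewrite -/(w t); lra.
have hcW : forall t, c <= W t.
  move=> t; rewrite /W; have := hF _ (hw t); have := hc _ (sX _ (hw t)); lra.
have [_ cv] := conv_core Ka Kg (fun k => hg _ (sX _ (hw k))) l0 hd hW hcW.
have d0 : forall t, 0 <= d t.
  by move=> t; apply: le_trans (hd t); apply: Kinf_ge0.
have Wle : forall t, W t <= W 0%N.
  elim=> [//|t IH]; apply: le_trans IH.
  by have := hW t; have := d0 t; lra.
have : 0 <= W 0%N.
  apply: (ler_cvg_to cv (cvg_cst (W 0%N))).
  apply: nearW => t /=.
  have := Wle t; have := hF _ (hw t); rewrite /W; lra.
by [].
Qed.


Lemma traj_X N x u : (0 < N)%N -> X0 `<=` X -> X x -> admissible f X X0 U N x u ->
  forall j, (j <= N)%N -> X (traj f x u j).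
Proof.
move=> N0 sX hx [_ [hX hX0]] [//|j] hj.
case: (ltnP j.+1 N) => h.
  by apply: hX => //; rewrite -ltnS (ltn_predK N0).
have -> : j.+1 = N by apply/eqP; rewrite eqn_leq hj h.
exact: sX.
Qed.

Lemma J_lower s (ell : 'I_s -> 'rV[R]_n -> 'rV[R]_m -> R) (i : 'I_s) N x u :
 ell i = l -> val i = 0%N -> (0 < N)%N ->
 X0 `<=` X -> Kinf alpha -> Kinf gamma -> lam xe = 0 -> l xe ue = 0 ->
 (forall x, X x -> c <= lam x) ->
 (forall x, X x -> `|lam x - lam xe| <= gamma `|x - xe|) ->
 (forall x u, X x -> U u -> X (f x u) ->
    alpha (`|x - xe| + `|u - ue|) <= l x u - l xe ue + lam x - lam (f x u)) ->
 (forall x, X0 x -> 0 <= F1 x) ->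
 (forall x, X0 x -> U (kappa x) /\ X0 (f x (kappa x)) /\
    F1 (f x (kappa x)) + l x (kappa x) <= F1 x + l xe ue) ->
 X x -> admissible f X X0 U N x u ->
 0 <= Jobj f ell F1 N i x u + lam x.
Proof.
move=> hl hi N0 sX Ka Kg l0 le0 hc hg hdis hF hk hx adm.
have hX := traj_X N0 sX hx adm.
have hz := F1lam_ge0 sX Ka Kg l0 le0 hc hg hdis hF hk (proj2 (proj2 adm)).
have ht := @tele_le R (fun j => ell i (traj f x u j) (u j)) (fun j => lam (traj f x u j)) N.
have := ht _.
move=> /(_ _)/wrap[].
  move=> j hj /=; rewrite hl.
  have := hdis _ _ (hX j (ltnW hj)) (proj1 adm j hj) (hX j.+1 hj).
  rewrite le0 subr0 => h.
  have := Kinf_ge0 Ka (addr_ge0 (normr_ge0 (traj f x u j - xe)) (normr_ge0 (u j - ue))).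
  lra.
rewrite /Jobj hi eqxx /= => h.
lra.
Qed.

End Sys2.

Unset Implicit Arguments.
Set Strict Implicit.

Theorem theorem4p5 (R : realType) (n m N s : nat)
  (f : 'rV[R]_n -> 'rV[R]_m -> 'rV[R]_n)
  (X X0 : set 'rV[R]_n) (U : set 'rV[R]_m)
  (ell : 'I_s -> 'rV[R]_n -> 'rV[R]_m -> R) (F1 : 'rV[R]_n -> R)
  (xe : 'rV[R]_n) (ue : 'rV[R]_m) (lambda1 : 'rV[R]_n -> R)
  (alpha1 gamma1 : R -> R) (kappa : 'rV[R]_n -> 'rV[R]_m) (x0 : 'rV[R]_n)
  (hN : (2 <= N)%N) (hs : (2 <= s)%N) :
  (* standing setting *)
  continuous (fun p : 'rV[R]_n * 'rV[R]_m => f p.1 p.2) ->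
  (exists x, X x) -> (exists u, U u) -> (exists x, X0 x) -> X0 `<=` X ->
  {within X0, continuous F1} -> (forall x, X0 x -> 0 <= F1 x) ->
  let ell1 := ell (Ordinal (ltnW hs)) in
  (* Assumption A (i) *)
  X xe -> U ue -> f xe ue = xe ->
  (* Assumption A (ii) *)
  (exists c : R, forall x, X x -> c <= lambda1 x) -> lambda1 xe = 0 ->
  Kinf alpha1 ->
  (forall x u, X x -> U u -> X (f x u) ->
     alpha1 (`|x - xe| + `|u - ue|)
       <= ell1 x u - ell1 xe ue + lambda1 x - lambda1 (f x u)) ->
  (* Assumption A (iii) *)
  (forall i, {within [set p : 'rV[R]_n * 'rV[R]_m | X p.1 /\ U p.2],
               continuous (fun p => ell i p.1 p.2)}) ->
  (* Assumption A (iv) *)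
  X0 xe ->
  (forall x, X0 x -> U (kappa x) /\ X0 (f x (kappa x)) /\
     F1 (f x (kappa x)) + ell1 x (kappa x) <= F1 x + ell1 xe ue) ->
  (* Assumption A (v) *)
  (forall x, feasible_set f X X0 U N x -> externally_stable f X X0 U ell F1 N x) ->
  (* additional hypotheses of the theorem *)
  feasible_set f X X0 U N x0 ->
  Kinf gamma1 ->
  (forall x, X x -> `|lambda1 x - lambda1 xe| <= gamma1 `|x - xe|) ->
  ell1 xe ue = 0 ->
  (* conclusions *)
  (* Algorithm 1 is well defined: step (0) is possible ... *)
  (exists u, efficient f X X0 U ell F1 N x0 u) /\
  (* ... and every run of steps 0..K can be continued by a step K+1 *)
  (forall (xs : nat -> 'rV[R]_n) (us : nat -> nat -> 'rV[R]_m) (K : nat),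
     alg1_upto f X X0 U ell F1 kappa N (Ordinal (ltnW hs)) x0 xs us K ->
     exists u, efficient f X X0 U ell F1 N (f (xs K) (us K 0%N)) u /\
       Jobj f ell F1 N (Ordinal (ltnW hs)) (f (xs K) (us K 0%N)) u
       <= Jobj f ell F1 N (Ordinal (ltnW hs)) (f (xs K) (us K 0%N))
            (candidate f kappa N (xs K) (us K))) /\
  (* every closed loop generated by Algorithm 1 stays in X and satisfies the
     performance bound *)
  (forall (xs : nat -> 'rV[R]_n) (us : nat -> nat -> 'rV[R]_m),
     (forall K, alg1_upto f X X0 U ell F1 kappa N (Ordinal (ltnW hs)) x0 xs us K) ->
     (forall k, X (xs k)) /\
     exists L : R,
       (fun K : nat => \sum_(k < K) ell1 (xs k) (us k 0%N)) @ \oo --> L /\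
       L <= Jobj f ell F1 N (Ordinal (ltnW hs)) x0 (us 0%N)).
Proof.
move=> fc hXn hUn hX0n sX F1c F1pos ell1 hXe hUe hfe [c hc] l0 Ka hdis hcont
  hX0e hk hext hfeas Kg hg le0.
set i1 := Ordinal (ltnW hs).
have hl : ell i1 = ell1 by [].
have hi : val i1 = 0%N by [].
have N0 : (0 < N)%N by apply: ltnW.
have hk' : forall z, X0 z -> U (kappa z) /\ X0 (f z (kappa z)).
  by move=> z hz; have [? [? _]] := hk z hz.
have N1 : (1 <= N.-1)%N by rewrite -ltnS (ltn_predK N0).
have eff_at : forall xs us K,
    alg1_upto f X X0 U ell F1 kappa N i1 x0 xs us K ->
    efficient f X X0 U ell F1 N (xs K) (us K).
  move=> xs us [|K] [h0 [h1 h2]] //.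
  by have [_ [? _]] := h2 K (ltnSn K).
split.
  case: (hfeas) => hx0 [u adm].
  by have [up [eff _]] := hext _ hfeas u adm; exists up.
split.
  move=> xs us K hK.
  have [adm _] := eff_at _ _ _ hK.
  have admc := cand_adm hN sX hk' adm.
  have hx' : X (f (xs K) (us K 0%N)).
    by have [_ [hX _]] := adm; exact: (hX 1%N).
  have [up [eff hle]] := hext _ (conj hx' (ex_intro _ _ admc)) _ admc.
  by exists up; split => //; apply: hle.
move=> xs us hall.
have hstep : forall k, xs k.+1 = f (xs k) (us k 0%N).
  by move=> k; have [_ [_ h]] := hall k.+1; have [] := h k (ltnSn k).
have heff : forall k, efficient f X X0 U ell F1 N (xs k) (us k).
  by move=> k; apply: eff_at (hall k).
have hdec : forall k, Jobj f ell F1 N i1 (xs k.+1) (us k.+1)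
    <= Jobj f ell F1 N i1 (xs k.+1) (candidate f kappa N (xs k) (us k)).
  by move=> k; have [_ [_ h]] := hall k.+1; have [_ []] := h k (ltnSn k).
have hx00 : xs 0%N = x0 by have [] := hall 0%N.
have hxs : forall k, X (xs k).
  case=> [|k]; first by rewrite hx00; case: hfeas.
  have [[_ [hX _]] _] := heff k.
  by rewrite hstep; exact: (hX 1%N).
pose V := fun k => Jobj f ell F1 N i1 (xs k) (us k).
have hV : forall k, V k.+1 + ell1 (xs k) (us k 0%N) <= V k.
  move=> k; have := hdec k; rewrite {2}hstep cand_cost //.
  have [[_ [_ hz]] _] := heff k.
  have [_ [_ hb]] := hk _ hz.
  rewrite le0 addr0 in hb.
  rewrite hl => h; rewrite /V; lra.
have hVl : forall k, 0 <= V k + lambda1 (xs k).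
  move=> k; have [adm _] := heff k.
  exact: (J_lower hl hi N0 sX Ka Kg l0 le0 hc hg hdis F1pos hk (hxs k) adm).
pose d := fun k => ell1 (xs k) (us k 0%N) + lambda1 (xs k) - lambda1 (xs k.+1).
pose W := fun k => V k + lambda1 (xs k).
have hd : forall k, alpha1 `|xs k - xe| <= d k.
  move=> k; have [[hU _] _] := heff k.
  apply: le_trans (_ : alpha1 (`|xs k - xe| + `|us k 0%N - ue|) <= d k).
    by apply: Kinf_le => //; rewrite lerDl.
  have := hdis _ _ (hxs k) (hU 0%N N0); rewrite -hstep => /(_ (hxs k.+1)).
  by rewrite le0 subr0.
have hW : forall k, W k.+1 + d k <= W k.
  by move=> k; have := hV k; rewrite /W /d; lra.
have hcW : forall k, 0 <= W k by [].
have [cv lcv] := conv_core Ka Kg (fun k => hg _ (hxs k)) l0 hd hW hcW.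
pose P := fun K => \sum_(k < K) ell1 (xs k) (us k 0%N).
have hP : P = fun K => series d K - lambda1 (xs 0%N) + lambda1 (xs K).
  apply: funext => K; rewrite /P (tele_eq (fun k => ell1 (xs k) (us k 0%N)) (fun j => lambda1 (xs j))) /series /= big_mkord.
  done.
have Pcv : P @ \oo --> limn (series d) - lambda1 x0.
  rewrite hP -[X in _ --> X]addr0 -hx00.
  apply: cvgD; last exact: lcv.
  apply: cvgB; first exact: cv.
  exact: cvg_cst.
split; first exact: hxs.
exists (limn (series d) - lambda1 x0); split; first exact: Pcv.
have hPb : forall K, P K - lambda1 (xs K) <= V 0%N.
  move=> K; have := sum_dec hV K; have := hVl K; rewrite /P; lra.
have hL : limn (series d) - lambda1 x0 - 0 <= V 0%N.
  apply: (ler_cvg_to (cvgB Pcv lcv) (cvg_cst (V 0%N))).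
  by apply: nearW => K; apply: hPb.
by move: hL; rewrite subr0 /V hx00.
Qed.
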